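(* Let $a$ be a weak composition of length $n$ that is not identically zero. Then $\lim_{m\to\infty}\mathcal{G}^{(1)}_{0^m a}=\tilde{L}_{\mathtt{flat}(a)}(x_1,x_2,\dots)$, in the sense that for every monomial $x^c$ in finitely many variables, the coefficient of $x^c$ in $\mathcal{G}^{(1)}_{0^m a}(x_1,\dots,x_{m+n})$ equals its coefficient in $\tilde{L}_{\mathtt{flat}(a)}$ for all sufficiently large $m$.
   Context: $0^m a$ denotes the weak composition obtained by prepending $m$ zeros to $a$. Glide polynomials: a weak komposition is a weak composition whose positive entries are colored black or red, $\mathrm{ex}(b)$ = number of red entries, $\mathtt{flat}(a)$ = sequence of nonzero entries of $a$. For $a$ of length $N$ with nonzero entries exactly at positions $n_1<\dots<n_\ell$, a weak komposition $b$ of length $N$ is a glide of $a$ if there exist $0=i_0<\dots<i_\ell$ with $i_j\le n_j$, $b_k=0$ for $k>i_\ell$, and for each $j$: $b_{i_{j-1}+1}+\dots+b_{i_j}=\mathtt{flat}(a)_j+\#\{\text{red entries among } b_{i_{j-1}+1},\dots,b_{i_j}\}$ and the first nonzero entry among them is black. $\mathcal{G}^{(\beta)}_a(x_1,\dots,x_N)=\sum_b\beta^{\mathrm{ex}(b)}x^b$ over glides $b$ of $a$; $\mathcal{G}^{(1)}$ is the specialization $\beta=1$. Multi-fundamental quasisymmetric functions (Lam–Pylyavskyy): for nonempty finite $S,S'\subset\mathbb{Z}_{>0}$ write $S<S'$ if $\max S<\min S'$ and $S\le S'$ if $\max S\le\min S'$. For a composition $\alpha$ with $|\alpha|=N$,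 let $\tilde{A}_\alpha$ be the set of sequences $\sigma=(S_1,\dots,S_N)$ of nonempty finite subsets of $\mathbb{Z}_{>0}$ such that $S_i<S_{i+1}$ if $i=\alpha_1+\dots+\alpha_k$ for some $k$, and $S_i\le S_{i+1}$ otherwise. $\mathrm{wt}(\sigma)_k$ is the number of indices $i$ with $k\in S_i$, and $\tilde{L}_\alpha=\sum_{\sigma\in\tilde A_\alpha}x^{\mathrm{wt}(\sigma)}$, a formal power series in $x_1,x_2,\dots$. *)

(* Defs.v *)
From mathcomp Require Import all_boot.
Set Implicit Arguments. Unset Strict Implicit. Unset Printing Implicit Defensive.

(* Weak compositions are [seq nat]; positions are 1-indexed in the paper and
   0-indexed in seqs (paper position p = seq index p-1). *)

Definition flat (a : seq nat) : seq nat := [seq x <- a | x != 0].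

Definition nzpos (a : seq nat) : seq nat :=
  [seq i.+1 | i <- iota 0 (size a) & nth 0 a i != 0].

(* A weak komposition is a [seq (nat * bool)]: (entry, is_red).
   (Red entries must be positive; this is imposed where kompositions are
   enumerated, see [coefG].) *)
Definition nred (blk : seq (nat * bool)) : nat := count (fun x => x.2) blk.

Definition glide_cond (a : seq nat) (b : seq (nat * bool)) (ix : seq nat) : bool :=
  let l := size (flat a) in
  let ib := 0 :: ix in
  [&& size b == size a, size ix == l, sorted ltn ib,
      all (fun j => nth 0 ix j <= nth 0 (nzpos a) j) (iota 0 l),
      (* b_k = 0 for k > i_l  (paper positions k = seq index + 1) *)
      all (fun x => x.1 == 0) (drop (last 0 ix) b) &
      all (fun j =>
             let blk := drop (nth 0 ib j) (take (nth 0 ib j.+1) b) in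
             (sumn (map fst blk) == nth 0 (flat a) j + nred blk)
             && ~~ (head (0, false) [seq x <- blk | x.1 != 0]).2)
          (iota 0 l)].

(* b is a glide of a : there exist 0 = i_0 < i_1 < ... < i_l (each i_j <= n_j
   <= size a, hence they can be taken in 'I_(size a).+1) satisfying the
   conditions. *)
Definition is_glide (a : seq nat) (b : seq (nat * bool)) : bool :=
  [exists t : (size (flat a)).-tuple 'I_(size a).+1,
     glide_cond a b (map val t)].

(* Coefficient of x^c = x_1^{c_0} x_2^{c_1} ... in G^{(1)}_a(x_1,...,x_N),
   N = size a: the number of glides b of a (kompositions, i.e. colorings
   with red entries positive) whose underlying weak composition is c. *)
Definition coefG (a : seq nat) (c : seq nat) : nat :=
  let N := size a in
  if all (fun x => x == 0) (drop N c) then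
    #|[set col : {ffun 'I_N -> bool} |
        [forall i, col i ==> (0 < nth 0 c i)] &&
        is_glide a [seq (nth 0 c (val i), col i) | i : 'I_N <- enum 'I_N]]|
  else 0.

Definition psums (alpha : seq nat) : seq nat :=
  [seq sumn (take k alpha) | k <- iota 1 (size alpha)].

(* Variable x_{k+1} corresponds
   to k : 'I_(size c); any subset containing an index >= size c would give a
   weight different from c, so sets of 'I_(size c) suffice. *)
Definition setlt K (S S' : {set 'I_K}) : bool :=
  [forall x in S, forall y in S', (x < y)%N].
Definition setle K (S S' : {set 'I_K}) : bool :=
  [forall x in S, forall y in S', (x <= y)%N].

Definition inAtilde (alpha : seq nat) K (sigma : {ffun 'I_(sumn alpha) -> {set 'I_K}}) : bool :=
  [forall i, sigma i != set0] &&
  [forall i, forall j, (val j == (val i).+1) ==>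
     (if (val i).+1 \in psums alpha then setlt (sigma i) (sigma j)
      else setle (sigma i) (sigma j))].

Definition wt_is (alpha : seq nat) (c : seq nat)
  (sigma : {ffun 'I_(sumn alpha) -> {set 'I_(size c)}}) : bool :=
  [forall k : 'I_(size c), #|[set i | k \in sigma i]| == nth 0 c k].

Definition coefL (alpha : seq nat) (c : seq nat) : nat :=
  #|[set sigma : {ffun 'I_(sumn alpha) -> {set 'I_(size c)}} |
      inAtilde sigma && wt_is sigma]|.

(* Main.v *)
From Stdlib Require Import FunctionalExtensionality.
Require Import Defs.
From mathcomp Require Import all_boot zify.
Set Implicit Arguments. Unset Strict Implicit. Unset Printing Implicit Defensive.

Definition ee (c : seq nat) (cb : nat -> bool) q := nth 0 c q - cb q.
Definition SS (c : seq nat) (cb : nat -> bool) t := sumn (map (ee c cb) (iota 0 t)).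

Section SLemmas.
Variables (c : seq nat) (cb : nat -> bool).
Local Notation cc q := (nth 0 c q).
Local Notation e := (ee c cb).
Local Notation S := (SS c cb).

Lemma SS0 : S 0 = 0. Proof. by []. Qed.

Lemma SSS t : S t.+1 = S t + e t.
Proof. by rewrite /SS -addn1 iotaD map_cat sumn_cat /= addn0. Qed.

Lemma SSsplit x y : x <= y -> S y = S x + sumn (map e (iota x (y - x))).
Proof. by move=> xy; rewrite /SS -{1}(subnKC xy) iotaD map_cat sumn_cat. Qed.

Lemma SS_mono x y : x <= y -> S x <= S y.
Proof. by move=> xy; rewrite (SSsplit xy) leq_addr. Qed.

Lemma sumn_zero (f : nat -> nat) s : (forall q, q \in s -> f q = 0) -> sumn (map f s) = 0.
Proof.
elim: s => //= x s IH H; rewrite H ?inE ?eqxx // IH // => q qs.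
by apply: H; rewrite inE qs orbT.
Qed.

Lemma SS_zero x y : x <= y -> (forall q, x <= q < y -> e q = 0) -> S y = S x.
Proof.
move=> xy H; rewrite (SSsplit xy) sumn_zero ?addn0 // => q; rewrite mem_iota => /andP[h1 h2].
apply: H; rewrite h1 /=; lia.
Qed.

Lemma SS_lt x y : S x < S y -> x < y.
Proof. by move=> h; rewrite ltnNge; apply/negP => /SS_mono; rewrite leqNgt h. Qed.

Hypothesis C0 : forall q, cb q -> 0 < cc q.

Lemma ee_add q : cc q = e q + cb q.
Proof. rewrite /ee; case: (boolP (cb q)) => h; last by rewrite subn0 addn0. by have := C0 h; lia. Qed.

Lemma sum_split s : sumn (map (fun q => cc q) s) = sumn (map e s) + count cb s.
Proof. elim: s => //= x s ->; rewrite (ee_add x); lia. Qed.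

Lemma SSS' t : S t.+1 = S t + cc t - cb t.
Proof. by rewrite SSS (ee_add t); lia. Qed.

End SLemmas.
Lemma card_range n a b : b <= n -> #|[set j : 'I_n | a <= j < b]| = b - a.
Proof.
elim: b => [|b IH] hb.
  by rewrite sub0n; apply/eqP; rewrite cards_eq0; apply/eqP/setP => j; rewrite !inE ltn0 andbF.
have hb' : b < n by [].
case: (leqP a b) => hab.
  have -> : [set j : 'I_n | a <= j < b.+1] = (Ordinal hb') |: [set j : 'I_n | a <= j < b].
    apply/setP => j; rewrite !inE -val_eqE /=; apply/idP/idP; lia.
  rewrite cardsU1 IH ?(ltnW hb) // inE /= ltnn andbF /=; lia.
have -> : [set j : 'I_n | a <= j < b.+1] = [set j : 'I_n | a <= j < b].
  apply/setP => j; rewrite !inE; apply/idP/idP; lia.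
rewrite IH ?(ltnW hb) //; lia.
Qed.

Lemma down_range n (X : {set 'I_n}) :
  (forall i i' : 'I_n, i \in X -> i' <= i -> i' \in X) ->
  forall i : 'I_n, (i \in X) = (i < #|X|).
Proof.
move=> Hd i; apply/idP/idP => [iX|].
  have : [set j : 'I_n | 0 <= j < i.+1] \subset X.
    by apply/subsetP => j; rewrite inE /= ltnS => hj; apply: Hd iX hj.
  by move/subset_leq_card; rewrite card_range // subn0.
apply: contraTT => iX.
have : X \subset [set j : 'I_n | 0 <= j < i].
  apply/subsetP => j jX; rewrite inE /= ltnNge; apply/negP => hij.
  by move: iX; rewrite (Hd _ _ jX hij).
by move/subset_leq_card; rewrite card_range ?subn0 ?(ltnW (ltn_ord i)) // leqNgt.
Qed.

Lemma suffix_range n (Y : {set 'I_n}) T :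
  T <= n -> (forall i : 'I_n, i \in Y -> i < T) ->
  (forall i i' : 'I_n, i \in Y -> i <= i' -> i' < T -> i' \in Y) ->
  forall i : 'I_n, (i \in Y) = (T - #|Y| <= i < T).
Proof.
move=> hT hYT Hu i; apply/idP/idP => [iY|/andP[h1 h2]].
  have hiT := hYT _ iY; rewrite hiT andbT.
  have : [set j : 'I_n | i <= j < T] \subset Y.
    by apply/subsetP => j; rewrite inE => /andP[hj1 hj2]; apply: Hu iY hj1 hj2.
  by move/subset_leq_card; rewrite card_range // !leq_subLR addnC.
apply/negPn/negP => iY.
have : Y \subset [set j : 'I_n | i.+1 <= j < T].
  apply/subsetP => j jY; rewrite inE hYT // andbT ltnNge; apply/negP => hji.
  by move: iY; rewrite (Hu _ _ jY hji h2).
by move/subset_leq_card; rewrite card_range //; lia.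
Qed.

Definition goodb (alpha c : seq nat) (cb : nat -> bool) :=
  [&& SS c cb (size c) == sumn alpha,
      [forall p : 'I_(size c), cb p ==> (0 < SS c cb p)] &
      [forall p : 'I_(size c), ~~ has (fun P => (P < sumn alpha) &&
            (SS c cb p - cb p < P < SS c cb p.+1)) (psums alpha)]].

Definition psi (alpha c : seq nat) (cb : nat -> bool)
  : {ffun 'I_(sumn alpha) -> {set 'I_(size c)}} :=
  [ffun i : 'I_(sumn alpha) => [set p : 'I_(size c) | (SS c cb p.+1 - nth 0 c p <= i) && (i < SS c cb p.+1)]].

Definition phib (alpha c : seq nat) (s : {ffun 'I_(sumn alpha) -> {set 'I_(size c)}}) (p : nat) : bool :=
  [exists j, exists q : 'I_(size c), exists p' : 'I_(size c),
     [&& q < p', val p' == p, q \in s j & p' \in s j]].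

Section PsiSec.
Variables (alpha c : seq nat) (cb : nat -> bool).
Local Notation cc q := (nth 0 c q).
Local Notation S := (SS c cb).
Local Notation n := (sumn alpha).
Local Notation K := (size c).
Hypothesis C0 : forall q, cb q -> 0 < cc q.
Hypothesis G : goodb alpha c cb.

Lemma G1 : S K = n. Proof. by case/and3P: G => /eqP. Qed.
Lemma G3 (p : 'I_K) : cb p -> 0 < S p.
Proof. by case/and3P: G => _ /forallP /(_ p) /implyP. Qed.
Lemma G2 (p : 'I_K) P : P \in psums alpha -> P < n -> S p - cb p < P -> P < S p.+1 -> False.
Proof.
case/and3P: G => _ _ /forallP /(_ p) /hasPn H hP hPn h1 h2.
by move: (H _ hP); rewrite hPn h1 h2.
Qed.

Lemma cb_lt q : cb q -> q < K.
Proof. move/C0; rewrite ltnNge; apply: contraNT => h; by rewrite nth_default // leqNgt. Qed.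

Lemma SSle (p : 'I_K) : S p.+1 <= n.
Proof. by rewrite -G1; apply: SS_mono; exact: ltn_ord. Qed.

Lemma start_eq (p : 'I_K) : S p.+1 - cc p = S p - cb p.
Proof.
rewrite (SSS' C0); case: (boolP (cb p)) => h /=.
  by have := C0 h; have := G3 h; lia.
lia.
Qed.

Lemma start_le (p : 'I_K) : cc p <= S p.+1.
Proof.
rewrite (SSS' C0); case: (boolP (cb p)) => h /=.
  by have := C0 h; have := G3 h; lia.
lia.
Qed.

Local Notation sg := (psi alpha c cb).

Lemma in_psi (i : 'I_n) (p : 'I_K) : (p \in sg i) = (S p - cb p <= i < S p.+1).
Proof. by rewrite ffunE inE start_eq. Qed.

Lemma psi_cons (i j : 'I_n) (x y : 'I_K) : val j = (val i).+1 ->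
  x \in sg i -> y \in sg j -> (x <= y) && ((x == y) ==> (val j \notin psums alpha)).
Proof.
move=> hj0; have hj : nat_of_ord j = (nat_of_ord i).+1 by exact: hj0.
rewrite !in_psi => /andP[hx1 hx2] /andP[hy1 hy2].
apply/andP; split.
  rewrite leqNgt; apply/negP => hyx.
  have := SS_mono c cb hyx.
  by case: (cb x) hx1 => /= hx1; lia.
apply/implyP => /eqP exy; subst y.
apply/negP => hP.
have h1 : S x - cb x < j by lia.
have h2 : (j:nat) < S x.+1 by lia.
exact: (G2 hP (ltn_ord j) h1 h2).
Qed.

Lemma psi_valid : inAtilde sg && wt_is sg.
Proof.
apply/andP; split; [apply/andP; split|].
- apply/forallP => i; apply/set0Pn.
  have hi : i < S K by rewrite G1.
  have exP : exists t, i < S t by exists K.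
  case: (ex_minnP exP) => t0 ht0 hmin.
  have t0pos : 0 < t0 by move: ht0; case: t0 {hmin} => //.
  have t0K : t0 <= K by apply: hmin.
  have hp : t0.-1 < K by lia.
  exists (Ordinal hp); rewrite in_psi /= prednK //; rewrite ht0 andbT.
  have : ~~ (i < S t0.-1) by apply/negP => /hmin; lia.
  by rewrite -leqNgt => h; apply: leq_trans h; apply: leq_subr.
- apply/forallP => i; apply/forallP => j; apply/implyP => /eqP hj.
  case: ifP => hP.
    apply/forallP => x; apply/implyP => hx; apply/forallP => y; apply/implyP => hy.
    case/andP: (psi_cons hj hx hy) => h1 /implyP h2.
    rewrite ltn_neqAle h1 andbT; apply/negP => /eqP exy.
    have : x == y by apply/eqP/val_inj.
    by move/h2; rewrite hj hP.
  apply/forallP => x; apply/implyP => hx; apply/forallP => y; apply/implyP => hy.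
  by case/andP: (psi_cons hj hx hy).
- apply/forallP => k.
  have -> : [set i | k \in sg i] = [set i : 'I_n | S k.+1 - cc k <= i < S k.+1].
    by apply/setP => i; rewrite !inE ffunE inE.
  rewrite card_range ?SSle //.
  by apply/eqP; have := start_le k; lia.
Qed.

Lemma phi_psi p : phib sg p = cb p.
Proof.
apply/idP/idP.
  case/existsP => j /existsP [q] /existsP [p'] /and4P [hqp /eqP hp' hq hpp].
  subst p; apply/negPn/negP => hcb.
  move: hq hpp; rewrite !in_psi (negbTE hcb) subn0 => /andP[_ hq] /andP[hp _].
  have := SS_mono c cb hqp; lia.
move=> hcb.
have hpK := cb_lt hcb.
have hS := @G3 (Ordinal hpK) hcb; rewrite /= in hS.
have exq : exists q, (q < p) && (0 < cc q).
  case: (boolP [exists q : 'I_p, 0 < cc q]) => [/existsP [q hq]|/existsPn hno].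
    by exists q; rewrite ltn_ord hq.
  exfalso.
  have : S p = S 0.
    apply: SS_zero => // q /andP[_ hq]; have := hno (Ordinal hq); rewrite /ee /=; lia.
  by rewrite SS0; lia.
have ub : forall q, (q < p) && (0 < cc q) -> q <= p by move=> q /andP[h _]; apply: ltnW.
case: (ex_maxnP exq ub) => q /andP[hqp hcq] hmax.
have hSq : S q.+1 = S p.
  apply/esym; apply: SS_zero => // r /andP[h1 h2]; rewrite /ee.
  have -> : cc r = 0.
    apply/eqP; rewrite eqn0Ngt; apply/negP => hr.
    by have := hmax r; rewrite h2 hr => /(_ isT); lia.
  by rewrite sub0n.
have hSpn : S p <= n by rewrite -G1; apply: SS_mono; apply: ltnW.
have hj : S p - 1 < n by lia.
have hqK : q < K by lia.
have hpp := SSS' C0 p; rewrite hcb in hpp.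
have hsq := start_eq (Ordinal hqK); rewrite /= in hsq.
have hcp := C0 hcb.
apply/existsP; exists (Ordinal hj); apply/existsP; exists (Ordinal hqK).
apply/existsP; exists (Ordinal hpK); rewrite /= hqp eqxx !in_psi /= hcb.
rewrite -hsq hSq.
apply/andP; split; apply/andP; split; lia.
Qed.
End PsiSec.

Section PhiSec.
Variables (alpha c : seq nat) (s : {ffun 'I_(sumn alpha) -> {set 'I_(size c)}}).
Local Notation cc q := (nth 0 c q).
Local Notation n := (sumn alpha).
Local Notation K := (size c).
Hypothesis V : inAtilde s && wt_is s.
Local Notation cb := (phib s).

Lemma s_ne (i : 'I_n) : s i != set0.
Proof. by case/andP: V => /andP[/forallP H _] _. Qed.

Lemma cons_le (i j : 'I_n) (x y : 'I_K) :
  nat_of_ord j = (nat_of_ord i).+1 -> x \in s i -> y \in s j -> x <= y.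
Proof.
case/andP: V => /andP[_ /forallP H] _ hj hx hy.
move: (H i) => /forallP /(_ j) /implyP /(_ (introT eqP hj)).
case: ifP => _.
  by move=> /forallP /(_ x) /implyP /(_ hx) /forallP /(_ y) /implyP /(_ hy) /ltnW.
by move=> /forallP /(_ x) /implyP /(_ hx) /forallP /(_ y) /implyP /(_ hy).
Qed.

Lemma cons_lt (i j : 'I_n) (x y : 'I_K) :
  nat_of_ord j = (nat_of_ord i).+1 -> (nat_of_ord j) \in psums alpha ->
  x \in s i -> y \in s j -> x < y.
Proof.
case/andP: V => /andP[_ /forallP H] _ hj hP hx hy.
move: (H i) => /forallP /(_ j) /implyP /(_ (introT eqP hj)).
rewrite -hj hP.
by move=> /forallP /(_ x) /implyP /(_ hx) /forallP /(_ y) /implyP /(_ hy).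
Qed.

Lemma wt (k : 'I_K) : #|[set i | k \in s i]| = cc k.
Proof. by case/andP: V => _ /forallP /(_ k) /eqP. Qed.

Lemma mono (i j : 'I_n) (x y : 'I_K) : i < j -> x \in s i -> y \in s j -> x <= y.
Proof.
move=> hij; have [d hd] : exists d, nat_of_ord j = i + d.+1 by exists (j - i.+1); lia.
elim: d i x hij hd => [|d IH] i x hij hd hx hy.
  by apply: (cons_le _ hx hy); rewrite hd addn1.
have hi' : i.+1 < n by have := ltn_ord j; lia.
case/set0Pn: (s_ne (Ordinal hi')) => z hz.
apply: (@leq_trans z); first exact: (cons_le _ hx hz).
by apply: (IH (Ordinal hi') z) => //=; lia.
Qed.

Definition AA p := [set i : 'I_n | [exists q : 'I_K, (q < p) && (q \in s i)]].
Definition TT p := #|AA p|.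

Lemma A_down p : forall i i' : 'I_n, i \in AA p -> i' <= i -> i' \in AA p.
Proof.
move=> i i'; rewrite !inE => /existsP [q /andP[hqp hq]] hi'.
case: (ltngtP i' i) => h; last 1 first.
  by apply/existsP; exists q; rewrite hqp (_ : i' = i) //; apply: val_inj.
  case/set0Pn: (s_ne i') => z hz; apply/existsP; exists z; rewrite hz andbT.
  by apply: leq_ltn_trans hqp; apply: (mono h hz hq).
lia.
Qed.

Lemma inA p (i : 'I_n) : (i \in AA p) = (i < TT p).
Proof. exact: (down_range (@A_down p)). Qed.

Lemma TT_le p : TT p <= n.
Proof. by rewrite /TT; apply: leq_trans (max_card _) _; rewrite card_ord. Qed.

Lemma in_s (p : 'I_K) (i : 'I_n) : (p \in s i) = (TT p.+1 - cc p <= i < TT p.+1).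
Proof.
have hY : forall i0 : 'I_n, i0 \in [set i | p \in s i] -> i0 < TT p.+1.
  by move=> i0; rewrite inE -inA inE => h; apply/existsP; exists p; rewrite ltnSn h.
have hU : forall i0 i1 : 'I_n, i0 \in [set i | p \in s i] -> i0 <= i1 -> i1 < TT p.+1 ->
    i1 \in [set i | p \in s i].
  move=> i0 i1; rewrite !inE -inA inE => h01 hle /existsP [q /andP[hq hq1]].
  case: (ltngtP i0 i1) => h.
  - have := mono h h01 hq1 => hpq.
    by rewrite (_ : p = q) //; apply: val_inj; apply/eqP; rewrite eqn_leq hpq -ltnS hq.
  - lia.
  - by rewrite (_ : i1 = i0) //; apply: val_inj.
have := @suffix_range n [set i | p \in s i] (TT p.+1) (TT_le _) hY hU i.
by rewrite inE wt.
Qed.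

Lemma cb_C0 q : cb q -> 0 < cc q.
Proof.
case/existsP => j /existsP [q0] /existsP [p'] /and4P [_ /eqP <- _ hp].
rewrite -wt; apply/card_gt0P; exists j; by rewrite inE.
Qed.

Lemma TT0 : TT 0 = 0.
Proof.
apply/eqP; rewrite cards_eq0; apply/eqP/setP => i; rewrite !inE.
by apply/negbTE/existsPn => q; rewrite ltn0.
Qed.

Lemma TT_step p : TT p.+1 = TT p + cc p - cb p.
Proof.
case: (ltnP p K) => hpK; last first.
  have -> : cc p = 0 by rewrite nth_default.
  have -> : cb p = false.
    apply/negbTE/existsPn => j; apply/existsPn => q; apply/existsPn => p'.
    apply/negP => /and4P [_ /eqP hp _ _].
    have hp' : nat_of_ord p' = p by exact: hp.
    by have := ltn_ord p'; lia.
  rewrite /TT (_ : AA p.+1 = AA p) ?addn0 ?subn0 //.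
  apply/setP => i; rewrite !inE; apply/existsP/existsP => [] [q /andP[h1 h2]]; exists q;
    rewrite h2 andbT; have := ltn_ord q; lia.
pose P := Ordinal hpK.
have hA : AA p.+1 = AA p :|: [set i | P \in s i].
  apply/setP => i; rewrite !inE; apply/existsP/orP => [[q /andP[h1 h2]]|[/existsP[q /andP[h1 h2]]|h]].
  - case: (ltngtP q p) => h3.
    + by left; apply/existsP; exists q; rewrite h3.
    + lia.
    + by right; rewrite (_ : P = q) //; apply: val_inj.
  - by exists q; rewrite h2 andbT; lia.
  - by exists P; rewrite h ltnSn.
have hI : #|AA p :&: [set i | P \in s i]| = cb p.
  case: (boolP (cb p)) => hcb.
    case/existsP: (hcb) => j /existsP [q] /existsP [p'] /and4P [hqp /eqP hp' hq hpj].
    have eP : p' = P by apply: val_inj.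
    subst p'.
    have jI : j \in AA p :&: [set i | P \in s i].
      by rewrite !inE hpj andbT; apply/existsP; exists q; rewrite hqp hq.
    apply/eqP; rewrite /= eqn_leq; apply/andP; split; last by apply/card_gt0P; exists j.
    rewrite -(cards1 j); apply: subset_leq_card; apply/subsetP => j' .
    rewrite !inE => /andP [/existsP[q' /andP[hq'p hq']] hpj']; apply/eqP.
    have hPv : nat_of_ord P = p by [].
    case: (ltngtP j' j) => h.
    - by have := mono h hpj' hq; lia.
    - by have := mono h hpj hq'; lia.
    - by apply: val_inj.
  apply/eqP; rewrite cards_eq0; apply/eqP/setP => j; rewrite !inE.
  apply/negbTE/negP => /andP [/existsP [q /andP[hqp hq]] hpj].
  move/negP: hcb; apply; apply/existsP; exists j; apply/existsP; exists q; apply/existsP; exists P.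
  by rewrite hqp hq hpj eqxx.
have := cardsUI (AA p) [set i | P \in s i].
rewrite -hA hI wt /TT => h.
by rewrite -h addnK.
Qed.

Lemma S_T p : SS c cb p = TT p.
Proof.
elim: p => [|p IH]; first by rewrite SS0 TT0.
by rewrite (SSS' (@cb_C0)) IH TT_step.
Qed.

Lemma psi_phi : psi alpha c cb = s.
Proof. by apply/ffunP => i; apply/setP => p; rewrite ffunE inE !S_T in_s. Qed.

Lemma good_phi : goodb alpha c cb.
Proof.
apply/and3P; split.
- rewrite S_T /TT (_ : AA K = setT) ?cardsT ?card_ord //.
  apply/setP => i; rewrite !inE; case/set0Pn: (s_ne i) => q hq.
  by apply/existsP; exists q; rewrite hq ltn_ord.
- apply/forallP => p; apply/implyP => hcb; rewrite S_T /TT.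
  case/existsP: (hcb) => j /existsP [q] /existsP [p'] /and4P [hqp /eqP hp' hq hpj].
  by apply/card_gt0P; exists j; rewrite inE; apply/existsP; exists q; rewrite hq -hp' hqp.
- apply/forallP => p; apply/hasPn => P hP; apply/negP => /and3P [hPn h1 h2].
  rewrite !S_T in h1 h2.
  have hst := TT_step p; have hc := @cb_C0 p.
  have hP1 : TT p.+1 - cc p <= P.-1 by case: (cb p) hc h1 hst => /=; lia.
  have hPpos : 0 < P by lia.
  have hP1n : P.-1 < n by lia.
  have hin1 : p \in s (Ordinal hP1n) by rewrite in_s /=; apply/andP; split; lia.
  have hin2 : p \in s (Ordinal hPn) by rewrite in_s /=; apply/andP; split; lia.
  have := @cons_lt (Ordinal hP1n) (Ordinal hPn) p p; rewrite /= prednK // ltnn.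
  by move=> /(_ erefl hP hin1 hin2).
Qed.

End PhiSec.

Lemma glide_condE a b ix : glide_cond a b ix =
  [&& size b == size a, size ix == size (flat a), sorted ltn (0 :: ix),
      all (fun j => nth 0 ix j <= nth 0 (nzpos a) j) (iota 0 (size (flat a))),
      all (fun x => x.1 == 0) (drop (last 0 ix) b) &
      all (fun j =>
         (sumn (map fst (drop (nth 0 (0::ix) j) (take (nth 0 (0::ix) j.+1) b)))
            == nth 0 (flat a) j + nred (drop (nth 0 (0::ix) j) (take (nth 0 (0::ix) j.+1) b)))
         && ~~ (head (0, false) [seq x <- drop (nth 0 (0::ix) j) (take (nth 0 (0::ix) j.+1) b)
                                 | x.1 != 0]).2) (iota 0 (size (flat a)))].
Proof. by []. Qed.

Definition fb (c : seq nat) (cb : nat -> bool) q := (nth 0 c q, cb q).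

Section BlockSec.
Variables (c : seq nat) (cb : nat -> bool) (N : nat).
Local Notation cc q := (nth 0 c q).
Local Notation f := (fb c cb).
Local Notation b := (map f (iota 0 N)).
Hypothesis C0 : forall q, cb q -> 0 < cc q.

Lemma blockE x y : x <= y -> y <= N -> drop x (take y b) = map f (iota x (y - x)).
Proof.
move=> xy yN; rewrite -map_take -map_drop take_iota drop_iota add0n.
by rewrite (minn_idPl yN).
Qed.

Lemma blk_sum s A : (sumn (map fst (map f s)) == A + nred (map f s)) = (sumn (map (ee c cb) s) == A).
Proof.
have -> : sumn (map fst (map f s)) = sumn (map (fun q => cc q) s) by rewrite -map_comp.
have -> : nred (map f s) = count cb s by rewrite /nred count_map.
by rewrite (sum_split C0) eqn_add2r.
Qed.

Lemma blk_head s : (head (0, false) [seq x <- map f s | x.1 != 0]).2 =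
  if [seq q <- s | cc q != 0] is h :: _ then cb h else false.
Proof. by elim: s => //= x s IH; case: ifP. Qed.

Lemma headL x k h t : [seq q <- iota x k | cc q != 0] = h :: t ->
  [/\ x <= h < x + k, cc h != 0 & forall p, x <= p < x + k -> cc p != 0 -> h <= p].
Proof.
move=> eL.
have hh : h \in [seq q <- iota x k | cc q != 0] by rewrite eL mem_head.
move: (hh); rewrite mem_filter mem_iota => /andP[h1 h2]; split => // p hp hcp.
have : p \in h :: t by rewrite -eL mem_filter mem_iota hp hcp.
rewrite inE => /orP [/eqP -> //|pt].
have : sorted ltn (h :: t) by rewrite -eL; apply: sorted_filter; [exact: ltn_trans|exact: iota_ltn_sorted].
move/(order_path_min ltn_trans) => /allP /(_ _ pt); exact: ltnW.
Qed.

End BlockSec.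

Lemma flat_pos a j : j < size (flat a) -> 0 < nth 0 (flat a) j.
Proof.
move=> hj; have := mem_nth 0 hj; rewrite /flat mem_filter => /andP[h _].
by rewrite lt0n.
Qed.

Lemma take_succ (s : seq nat) j : j < size s -> sumn (take j.+1 s) = sumn (take j s) + nth 0 s j.
Proof. by move=> hj; rewrite (take_nth 0 hj) sumn_rcons. Qed.

Lemma take_lt a j : j < size (flat a) -> sumn (take j (flat a)) < sumn (flat a).
Proof.
move=> hj; rewrite -{2}(cat_take_drop j (flat a)) sumn_cat -addn1 leq_add2l.
rewrite (drop_nth 0 hj) /=; have := flat_pos hj; lia.
Qed.

Section GlideSec.
Variables (a' c : seq nat) (cb : nat -> bool).
Local Notation cc q := (nth 0 c q).
Local Notation f := (fb c cb).
Local Notation N := (size a').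
Local Notation K := (size c).
Local Notation b := (map f (iota 0 N)).
Local Notation l := (size (flat a')).
Local Notation n := (sumn (flat a')).
Local Notation S := (SS c cb).
Local Notation PP j := (sumn (take j (flat a'))).
Hypothesis C0 : forall q, cb q -> 0 < cc q.
Hypothesis hKN : K <= N.

Lemma ccK q : K <= q -> cc q = 0.
Proof. by move=> h; rewrite nth_default. Qed.

Lemma glide_good ix : all (fun x => x <= N) ix -> glide_cond a' b ix -> goodb (flat a') c cb.
Proof.
move=> hixN; rewrite glide_condE => /and5P [_ /eqP hsix hsort _ /andP[hzero /allP hblk]].
pose u j := nth 0 (0 :: ix) j.
have hu0 : u 0 = 0 by [].
have hu_lt : forall i j, i < j -> j <= l -> u i < u j.
  move=> i j hij hjl; apply: (sorted_ltn_nth ltn_trans 0 hsort) => //; rewrite inE /= hsix; lia.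
have hu_le : forall i j, i <= j -> j <= l -> u i <= u j.
  move=> i j; rewrite leq_eqVlt => /orP [/eqP -> //|hij] hjl; exact/ltnW/hu_lt.
have huN : forall j, u j <= N.
  move=> j; rewrite /u; case: (ltnP j (size (0 :: ix))) => hj; last by rewrite nth_default.
  have hall : all (fun x => x <= N) (0 :: ix) by rewrite /= hixN.
  exact: (allP hall _ (mem_nth 0 hj)).
have hblk' : forall j, j < l ->
    sumn (map (ee c cb) (iota (u j) (u j.+1 - u j))) = nth 0 (flat a') j /\
    ~~ (if [seq q <- iota (u j) (u j.+1 - u j) | cc q != 0] is h :: _ then cb h else false).
  move=> j hj; have := hblk j; rewrite mem_iota /= hj => /(_ isT).
  rewrite (blockE _ _ (hu_le j j.+1 _ _)) ?huN // ?blk_sum ?blk_head // => /andP[/eqP h1 h2].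
  by split.
have hS : forall j, j <= l -> S (u j) = PP j.
  elim => [|j IH] hj; first by rewrite hu0 take0 SS0.
  have hjl : j < l by [].
  have hle : u j <= u j.+1 by apply: hu_le.
  rewrite (SSsplit _ _ hle). rewrite IH; last exact: ltnW.
  rewrite (take_succ hjl).
  by case: (hblk' j hjl) => ->.
have hlast : last 0 ix = u l by rewrite (last_nth 0) hsix.
have hccz : forall q, u l <= q -> cc q = 0.
  move=> q hq; case: (ltnP q N) => hqN; last by rewrite ccK //; lia.
  move: hzero; rewrite hlast -map_drop drop_iota all_map => /allP /(_ q).
  rewrite mem_iota /= add0n; have -> : u l <= q < u l + (N - u l) by apply/andP; split; lia.
  by move=> /(_ isT) /eqP.
have hSK : S K = n.
  have e1 : S (maxn K (u l)) = S K.
    apply: SS_zero; first exact: leq_maxl.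
    by move=> q /andP [hq _]; rewrite /ee ccK.
  have e2 : S (maxn K (u l)) = S (u l).
    apply: SS_zero; first exact: leq_maxr.
    by move=> q /andP [hq _]; rewrite /ee hccz.
  by rewrite -e1 e2 hS // take_size.
have hred : forall p, cb p -> exists j, [/\ j < l, u j <= p, p < u j.+1 & S (u j) < S p].
  move=> p hcb; have hcp := C0 hcb.
  have hpl : p < u l by rewrite ltnNge; apply/negP => /hccz; lia.
  have exP : exists j, p < u j by exists l.
  case: (ex_minnP exP) => j1 hj1 hmin.
  have hj1l : j1 <= l by apply: hmin.
  have hj1p : 0 < j1 by move: hj1; case: j1 {hmin hj1l} => //.
  have hjp : u j1.-1 <= p by rewrite leqNgt; apply/negP => /hmin; lia.
  exists j1.-1; rewrite prednK //; split; [lia|exact: hjp|exact: hj1|].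
  case: (hblk' j1.-1 _) => [|_]; first lia.
  rewrite prednK //.
  case eL : [seq q <- iota (u j1.-1) (u j1 - u j1.-1) | cc q != 0] => [|h t].
    have : p \in [seq q <- iota (u j1.-1) (u j1 - u j1.-1) | cc q != 0].
      by rewrite mem_filter mem_iota -lt0n hcp /=; apply/andP; split; lia.
    by rewrite eL.
  move=> hh; case: (headL eL) => /andP [hh1 hh2] hh3 hh4.
  have hhp : h <= p by apply: hh4; [apply/andP; split; lia | rewrite -lt0n].
  have hhp' : h < p by rewrite ltn_neqAle hhp andbT; apply/negP => /eqP ehp; move: hh; rewrite ehp hcb.
  have := SS_mono c cb hhp'; rewrite SSS /ee (negbTE hh) subn0.
  have := SS_mono c cb hh1.
  rewrite -lt0n in hh3; lia.
apply/and3P; split.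
- by apply/eqP.
- apply/forallP => p; apply/implyP => /hred [j [_ _ _ h]]; lia.
- apply/forallP => p; apply/hasPn => P hP; apply/negP => /and3P [hPn h1 h2].
  case/mapP: hP => k; rewrite mem_iota => /andP [hk1 hk2] eP.
  have hkl : k < l.
    rewrite ltn_neqAle; apply/andP; split; last by lia.
    by apply/negP => /eqP ekl; move: hPn; rewrite eP ekl take_size ltnn.
  have hSk := hS k (ltnW hkl); rewrite -eP in hSk.
  case: (ltnP p (u k)) => hpk.
    by have := SS_mono c cb hpk; lia.
  case: (boolP (cb p)) => hcb.
    case: (hred _ hcb) => j [hjl hjp hpj hSj].
    have hkj : k <= j by rewrite leqNgt; apply/negP => hjk; have := hu_le j.+1 k hjk (ltnW hkl); lia.
    have := SS_mono c cb (hu_le k j hkj (ltnW hjl)); rewrite hcb /= in h1; lia.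
  by have := SS_mono c cb hpk; rewrite (negbTE hcb) /= in h1; lia.
Qed.

End GlideSec.

Lemma path_map_iota (u : nat -> nat) k x :
  (forall j, x <= j -> j < x + k -> u j < u j.+1) -> path ltn (u x) (map u (iota x.+1 k)).
Proof.
elim: k x => [|k IH] x H //=.
rewrite H ?leqnn ?addnS ?ltnS ?leq_addr //=.
apply: IH => j hj1 hj2; apply: H; lia.
Qed.

Section GlideSec2.
Variables (a' c : seq nat) (cb : nat -> bool).
Local Notation cc q := (nth 0 c q).
Local Notation f := (fb c cb).
Local Notation N := (size a').
Local Notation K := (size c).
Local Notation b := (map f (iota 0 N)).
Local Notation l := (size (flat a')).
Local Notation n := (sumn (flat a')).
Local Notation S := (SS c cb).
Local Notation PP j := (sumn (take j (flat a'))).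
Hypothesis C0 : forall q, cb q -> 0 < cc q.
Hypothesis hKN : K <= N.
Hypothesis hnz : forall x, x \in nzpos a' -> K < x.
Hypothesis hsz : size (nzpos a') = l.
Hypothesis hl : 0 < l.

Lemma good_glide : goodb (flat a') c cb -> is_glide a' b.
Proof.
move=> G.
have hSK := G1 G.
pose g P := \max_(t < K.+1 | S t <= P) t.
have g_ge : forall P (t : 'I_K.+1), S t <= P -> t <= g P.
  by move=> P t ht; apply: (leq_bigmax_cond t ht).
have g_spec : forall P, S (g P) <= P /\ g P <= K.
  move=> P; rewrite /g (bigmax_eq_arg ord0) ?SS0 //.
  case: arg_maxnP => //= i hi _; split => //; exact: (ltn_ord i).
pose u j := if j == 0 then 0 else if j == l then K else g (PP j).
have hu0 : u 0 = 0 by [].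
have hul : u l = K by rewrite /u eqxx; move: hl; case: l.
have huK : forall j, u j <= K.
  by move=> j; rewrite /u; case: ifP => // _; case: ifP => // _; case: (g_spec (PP j)).
have hPn : forall j, j < l -> PP j < n by move=> j; apply: take_lt.
have hPsucc : forall j, j < l -> PP j.+1 = PP j + nth 0 (flat a') j by move=> j; apply: take_succ.
have hPin : forall j, 0 < j -> j < l -> PP j \in psums (flat a').
  move=> j hj0 hjl; apply/mapP; exists j => //; rewrite mem_iota; lia.
have hmid : forall j, 0 < j -> j < l ->
    [/\ S (u j) = PP j, u j < K, cb (u j) = false & 0 < cc (u j)].
  move=> j hj0 hjl.
  have hu : u j = g (PP j) by rewrite /u; case: eqP => [|_]; [lia|]; case: eqP => [|_] //; lia.
  rewrite hu; set t := g (PP j); case: (g_spec (PP j)) => hSt htK.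
  have htK' : t < K.
    rewrite ltn_neqAle htK andbT; apply/negP => /eqP et.
    by move: hSt; rewrite -/t et hSK leqNgt hPn.
  have hSt1 : PP j < S t.+1.
    rewrite ltnNge; apply/negP => h.
    by have := g_ge (PP j) (Ordinal (htK' : t.+1 < K.+1)) h; rewrite /= -/t ltnn.
  have hG2 := @G2 _ _ _ G (Ordinal htK') (PP j) (hPin j hj0 hjl) (hPn j hjl).
  rewrite /= in hG2.
  have hSeq : S t = PP j.
    apply/eqP; rewrite eqn_leq hSt /= leqNgt; apply/negP => hlt.
    by apply: hG2 => //; apply: leq_ltn_trans hlt; apply: leq_subr.
  have hcbt : cb t = false.
    apply/negP => hcb; apply: hG2 => //; rewrite hcb hSeq.
    have := hPn j hjl; have : 0 < PP j.
      have := hPsucc j.-1 (leq_ltn_trans (leq_pred j) hjl); rewrite prednK // => ->.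
      have := flat_pos (leq_ltn_trans (leq_pred j) hjl); lia.
    lia.
  split => //.
  move: hSt1; rewrite (SSS' C0) hcbt hSeq; lia.
have hSu : forall j, j <= l -> S (u j) = PP j.
  move=> j hjl; case: (posnP j) => [->|hj0]; first by rewrite hu0 take0 SS0.
  case: (ltngtP j l) => hjl'; [by case: (hmid j hj0 hjl') | lia |].
  by rewrite hjl' hul hSK take_size.
have hu_lt : forall j, j < l -> u j < u j.+1.
  move=> j hjl; apply: (SS_lt (c:=c) (cb:=cb)).
  rewrite (hSu j (ltnW hjl)) (hSu j.+1 hjl) (hPsucc j hjl).
  have := flat_pos hjl; lia.
pose ix := map u (iota 1 l).
have hix : 0 :: ix = map u (iota 0 l.+1) by [].
have hnth : forall j, j <= l -> nth 0 (0 :: ix) j = u j.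
  by move=> j hj; rewrite hix (nth_map 0) ?size_iota ?nth_iota.
have hsize : size [seq (inord (u j) : 'I_N.+1) | j <- iota 1 l] == l.
  by rewrite size_map size_iota.
apply/existsP; exists (Tuple hsize).
have -> : map val (Tuple hsize) = ix.
  rewrite /= -map_comp; apply: eq_map => j /=; rewrite inordK //.
  by have := huK j; lia.
rewrite glide_condE; apply/and5P; split.
- by rewrite size_map size_iota.
- by rewrite size_map size_iota.
- by rewrite /sorted /ix /=; apply: path_map_iota => j _ hj; apply: hu_lt.
- apply/allP => j; rewrite mem_iota => /andP [_ hj]; rewrite add0n in hj.
  rewrite /ix (nth_map 0) ?size_iota // nth_iota //.
  have hjn : j < size (nzpos a') by rewrite hsz.
  have H1 := hnz (mem_nth 0 hjn).
  exact: leq_trans (huK _) (ltnW H1).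
apply/andP; split.
  rewrite (last_nth 0) hnth; last by rewrite size_map size_iota.
  rewrite size_map size_iota hul -map_drop drop_iota all_map; apply/allP => q.
  by rewrite mem_iota /= => /andP [hq _]; rewrite ccK.
apply/allP => j; rewrite mem_iota => /andP [_ hj]; rewrite add0n in hj.
rewrite !hnth; [|exact: hj|exact: ltnW].
have hle : u j <= u j.+1 by apply: ltnW; apply: hu_lt.
have hN : u j.+1 <= N by apply: leq_trans (huK _) hKN.
rewrite (blockE _ _ hle hN) blk_sum // blk_head.
apply/andP; split.
  apply/eqP; have := SSsplit c cb hle; rewrite (hSu j (ltnW hj)) (hSu j.+1 hj) (hPsucc j hj).
  lia.
case: (posnP j) => [ej|hj0].
  subst j; rewrite hu0.
  case eL : [seq q <- iota 0 (u 1 - 0) | cc q != 0] => [//|h t].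
  case: (headL eL) => /andP [_ hh2] hh3 hh4.
  have hhK : h < K by rewrite ltnNge; apply/negP => /ccK; apply/eqP.
  apply/negP => hcb.
  have := @G3 _ _ _ G (Ordinal hhK) hcb; rewrite /=.
  have -> : S h = S 0.
    apply: SS_zero => // q /andP [_ hqh]; rewrite /ee.
    have -> : cc q = 0.
      apply/eqP; apply/negPn/negP => hq; have := hh4 q _ hq; lia.
    by rewrite sub0n.
  by rewrite SS0.
case: (hmid j hj0 hj) => _ _ hcb hcc.
have -> : u j.+1 - u j = (u j.+1 - u j).-1.+1 by have := hu_lt j hj; lia.
by rewrite /= -lt0n hcc /= hcb.
Qed.

End GlideSec2.

Definition cbf N (col : {ffun 'I_N -> bool}) (p : nat) : bool :=
  [exists i : 'I_N, (val i == p) && col i].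

Lemma cbfE N (col : {ffun 'I_N -> bool}) (i : 'I_N) : cbf col i = col i.
Proof.
apply/existsP/idP => [[j /andP [/eqP e h]]|h]; last by exists i; rewrite eqxx h.
by rewrite (_ : i = j) //; apply: val_inj.
Qed.

Lemma phib_lt alpha c s p : @phib alpha c s p -> p < size c.
Proof.
case/existsP => j /existsP [q] /existsP [p'] /and4P [_ /eqP <- _ _].
exact: ltn_ord.
Qed.

Lemma flat_pad m a : flat (nseq m 0 ++ a) = flat a.
Proof. by rewrite /flat filter_cat; elim: m. Qed.

Theorem mainTheorem6 (a : seq nat) (ha : has (fun x => x != 0) a) :
  forall c : seq nat, exists M : nat, forall m : nat, M <= m ->
    coefG (nseq m 0 ++ a) c = coefL (flat a) c.
Proof.
move=> c; exists (size c) => m hm.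
set a' := nseq m 0 ++ a.
have hflat : flat a' = flat a by apply: flat_pad.
have hN : size a' = m + size a by rewrite size_cat size_nseq.
have hKN : size c <= size a' by rewrite hN; apply: leq_trans hm (leq_addr _ _).
have hl : 0 < size (flat a') by rewrite hflat /flat size_filter_gt0.
have hnz : forall x, x \in nzpos a' -> size c < x.
  move=> x /mapP [i]; rewrite mem_filter => /andP [hi _] ->.
  move: hi; rewrite /a' nth_cat size_nseq; case: (ltnP i m) => him.
    by rewrite nth_nseq him.
  by move=> _; rewrite ltnS; apply: leq_trans hm him.
have hsz : size (nzpos a') = size (flat a').
  rewrite /nzpos size_map size_filter /flat size_filter.
  have E : count (fun x => x != 0) a' = count (fun x => x != 0) (mkseq (nth 0 a') (size a'))
    by rewrite mkseq_nth.
  by rewrite E /mkseq count_map.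
rewrite /coefG (drop_oversize hKN) /=.
set GS := [set col : {ffun 'I_(size a') -> bool} |
             [forall i, col i ==> (0 < nth 0 c i)] && goodb (flat a) c (cbf col)].
have hbE : forall col : {ffun 'I_(size a') -> bool},
    [seq (nth 0 c (val i), col i) | i : 'I_(size a') <- enum 'I_(size a')] =
    map (fb c (cbf col)) (iota 0 (size a')).
  move=> col; rewrite -val_enum_ord -map_comp; apply: eq_map => i.
  by rewrite /fb /= cbfE.
have hC0 : forall col : {ffun 'I_(size a') -> bool}, [forall i, col i ==> (0 < nth 0 c i)] ->
    forall q, cbf col q -> 0 < nth 0 c q.
  move=> col /forallP H q /existsP [i /andP [/eqP <- hi]].
  by move: (H i) => /implyP /(_ hi).
have -> : [set col : {ffun 'I_(size a') -> bool} | [forall i, col i ==> (0 < nth 0 c i)] &&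
          is_glide a' [seq (nth 0 c (val i), col i) | i : 'I_(size a') <- enum 'I_(size a')]] = GS.
  apply/setP => col; rewrite !inE hbE.
  case: (boolP [forall i, col i ==> (0 < nth 0 c i)]) => //= H.
  apply/idP/idP => [/existsP [t ht]|hg].
    rewrite -hflat; apply: (glide_good (hC0 _ H) hKN (ix := map val t)) => //.
    by apply/allP => x /mapP [y _ ->]; rewrite -ltnS ltn_ord.
  apply: (good_glide (hC0 _ H) hKN hnz hsz hl).
  by rewrite hflat.
rewrite /coefL.
pose ps (col : {ffun 'I_(size a') -> bool}) := psi (flat a) c (cbf col).
have hinj : {in GS &, injective ps}.
  move=> col1 col2; rewrite !inE => /andP [H1 G1'] /andP [H2 G2'] eps.
  apply/ffunP => i; rewrite -!cbfE.
  rewrite -(phi_psi (hC0 _ H1) G1') -(phi_psi (hC0 _ H2) G2').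
  by move: eps; rewrite /ps => ->.
rewrite -(card_in_imset hinj); apply: eq_card => s.
rewrite [in RHS]inE; apply/imsetP/idP => [[col]|V].
  by rewrite inE => /andP [H G] ->; apply: psi_valid (hC0 _ H) G.
pose col' := [ffun i : 'I_(size a') => phib s i].
have hcol' : cbf col' = phib s.
  apply: functional_extensionality => p.
  case: (ltnP p (size a')) => hp.
    by rewrite -[p]/(val (Ordinal hp)) cbfE ffunE.
  apply/idP/idP => [/existsP [i /andP [/eqP ei _]]|/phib_lt hpK]; first by move: (ltn_ord i); rewrite ei; lia.
  by lia.
exists col'.
  rewrite inE hcol' good_phi // andbT; apply/forallP => i; apply/implyP.
  by rewrite ffunE; apply: (cb_C0 V).
by rewrite /ps hcol' psi_phi.
Qed.
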